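(* Let $n\geq 2$, $F$ a field of characteristic $0$, and let $R=M_n(F)$ carry the elementary $\mathbb{Z}_{n+1}$-grading induced by $(\overline 0,\overline 1,\dots,\overline{n-1})$. Then the monomial $x_1x_2\cdots x_n$ with $\deg x_i=\overline 1$ for all $i$ is a graded identity of $R$, while $R$ satisfies no graded monomial identity of length less than $n$. In particular, this monomial identity of length $n$ does not follow from graded monomial identities of smaller length, so the bound $n$ in the statement ''every graded monomial identity of an elementary grading on $M_n(F)$ follows from those of length at most $n$'' cannot be improved.
   Context: The elementary $G$-grading on $M_n(F)$ induced by $(g_1,\dots,g_n)\in G^n$ (here $G=\mathbb{Z}_{n+1}$, written additively) is $R_g=\mathrm{span}\{e_{pq}: g_q-g_p=g\}$. A graded monomial $x_1\cdots x_k$ (variables with prescribed degrees in $G$) is a graded identity if it vanishes whenever each $x_i$ is replaced by an element of $R_{\deg x_i}$; its length is $k$. *)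

(* Defs.v *)
From HB Require Import structures.
From mathcomp Require Import all_boot all_order all_algebra.
Set Implicit Arguments. Unset Strict Implicit. Unset Printing Implicit Defensive.
Import GRing.Theory.
Local Open Scope ring_scope.

(* The group G = Z_{m} is represented by 'I_m (here m = n.+1), with its
   canonical additive (Zp) structure. *)

(* Homogeneous component R_g of the elementary grading on M_n(F) induced by
   gs : 'I_n -> G : R_g = span{ e_pq : gs q - gs p = g }, i.e. the matrices
   supported on the entries (p,q) with gs q - gs p = g. *)
Definition elem_component (F : fieldType) (n m : nat)
  (gs : 'I_n -> 'I_m.+1) (g : 'I_m.+1) (A : 'M[F]_n) : Prop :=
  forall p q : 'I_n, A p q != 0 -> gs q - gs p = g.

Definition mx_monomial (F : fieldType) (n : nat) (xs : seq 'M[F]_n) : 'M[F]_n :=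
  foldr (fun A B => A *m B) 1%:M xs.

(* The graded monomial x_1 ... x_k with deg x_i = ds_i (ds : seq G, k = size ds)
   is a graded identity for the grading induced by gs. *)
Definition graded_monomial_identity (F : fieldType) (n m : nat)
  (gs : 'I_n -> 'I_m.+1) (ds : seq 'I_m.+1) : Prop :=
  forall xs : seq 'M[F]_n, size xs = size ds ->
    (forall i, (i < size ds)%N -> elem_component gs (nth 0 ds i) (nth 0 xs i)) ->
    mx_monomial xs = 0.

Definition std_tuple (n : nat) : 'I_n -> 'I_n.+1 := fun p => inZp p.

(* Main.v *)
Require Import Defs.
From HB Require Import structures.
From mathcomp Require Import all_boot all_order all_algebra.
Import GRing.Theory.
Local Open Scope ring_scope.

Lemma degval (n : nat) (x y : 'I_n.+1) : val (x + y) = ((val x + val y) %% n.+1)%N.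
Proof. by []. Qed.

Lemma inZpval (n : nat) (a : 'I_n) : val (inZp a : 'I_n.+1) = val a.
Proof. rewrite /= modn_small //; apply: leq_trans (ltn_ord a) _; exact: leqnSn. Qed.

Lemma inZp1val (n : nat) : (0 < n)%N -> val (inZp 1 : 'I_n.+1) = 1%N.
Proof. move=> n0. change ((1 %% n.+1)%N = 1%N). apply: modn_small. by rewrite ltnS. Qed.

Lemma step1 (n : nat) (a b : 'I_n) : (1 < n)%N ->
  (inZp b - inZp a : 'I_n.+1) = inZp 1 -> val b = (val a + 1)%N.
Proof.
move=> n1 /eqP; rewrite subr_eq => /eqP /(congr1 val).
rewrite degval !inZpval inZp1val; last exact: (ltn_trans (ltn0Sn 0) n1).
move=> ->; rewrite modn_small; first exact: addnC.
rewrite add1n ltnS; exact: ltn_ord.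
Qed.

Lemma pick_nz (F : fieldType) (n : nat) (A B : 'M[F]_n) p q :
  (A *m B) p q != 0 -> exists r, A p r != 0 /\ B r q != 0.
Proof.
rewrite mxE; case: (pickP (fun r => A p r * B r q != 0)) => [r|H].
  by rewrite mulf_eq0 negb_or => /andP[h1 h2] _; exists r.
by rewrite big1 ?eqxx // => r _; apply/eqP; move: (H r) => /negbFE.
Qed.

Lemma part1 (F : fieldType) (n : nat) : (1 < n)%N ->
  forall xs : seq 'M[F]_n,
  (forall i, (i < size xs)%N -> elem_component (@std_tuple n) (inZp 1) (nth 0 xs i)) ->
  forall p q, mx_monomial xs p q != 0 -> val q = (val p + size xs)%N.
Proof.
move=> n1; elim=> [|A xs IH] H p q /=.
  rewrite mxE addn0; case: (p =P q) => [-> //|_].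
  by rewrite mulr0n eqxx.
move=> /pick_nz [r [h1 h2]].
have hr : val r = (val p + 1)%N.
  by apply: step1 => //; exact: (H 0%N erefl p r h1).
rewrite (IH _ r q h2) ?hr /= -?addnA ?add1n //.
by move=> i hi; apply: (H i.+1).
Qed.

Fixpoint psum (n : nat) (ds : seq 'I_n.+1) (i : nat) : 'I_n.+1 :=
  match i with 0 => 0 | i'.+1 => psum n ds i' + nth 0 ds i' end.
Arguments psum {n} ds i.

Lemma path_entry (F : fieldType) (n : nat) (P : nat -> 'I_n) (l m : nat) :
  mx_monomial [seq (delta_mx (P j) (P j.+1) : 'M[F]_n) | j <- iota m l] (P m) (P (m + l)%N) = 1.
Proof.
elim: l m => [|l IH] m /=; first by rewrite addn0 mxE eqxx.
rewrite mxE (bigD1 (P m.+1)) //= big1 ?addr0.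
  by rewrite mxE !eqxx mul1r -addSnnS IH.
by move=> r /negbTE hr; rewrite mxE hr andbF mul0r.
Qed.

Theorem mainTheorem5 (F : fieldType) (n : nat) :
  (2 <= n)%N -> [pchar F] =i pred0 ->
  graded_monomial_identity F (@std_tuple n) (nseq n (inZp 1 : 'I_n.+1)) /\
  (forall ds : seq 'I_n.+1, (size ds < n)%N ->
     ~ graded_monomial_identity F (@std_tuple n) ds).
Proof.
move=> n2 _; split.
  move=> xs; rewrite size_nseq => hs H.
  apply/matrixP => p q; rewrite mxE; apply/eqP; apply: contraT => hpq.
  have hv : val q = (val p + size xs)%N.
    apply: (@part1 F n n2 xs _ p q hpq) => i hi.
    have hi' : (i < n)%N by rewrite -hs.
    by have := H i hi'; rewrite nth_nseq hi'.
  have := ltn_ord q; by rewrite hv hs ltnNge leq_addl.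
move=> ds hk GI.
set k := size ds.
set S := [set (ord_max - psum ds i) | i : 'I_k.+1].
have : ~~ ([set: 'I_n.+1] \subset S).
  apply/negP => /subset_leq_card; rewrite cardsT card_ord.
  apply/negP; rewrite -ltnNge; apply: leq_ltn_trans (leq_imset_card _ _) _.
  by rewrite card_ord ltnS.
move=> /subsetPn [c _ hc].
have hne : forall i, (i <= k)%N -> c + psum ds i != ord_max.
  move=> i hi; apply/negP => /eqP he; move/negP: hc; apply.
  apply/imsetP; exists (Ordinal (n:=k.+1) (m:=i) hi) => //=.
  by rewrite -he addrK.
have hlt : forall i, (i <= k)%N -> (val (c + psum ds i)%R < n)%N.
  move=> i hi; have := ltn_ord (c + psum ds i)%R; rewrite ltnS leq_eqVlt.
  case/orP => // /eqP h; exfalso; move/negP: (hne i hi); apply.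
  by apply/eqP/val_inj.
have n0 : (0 < n)%N by apply: leq_trans n2.
pose o : 'I_n := Ordinal n0.
pose P i := insubd o (val (c + psum ds i)) : 'I_n.
have hP : forall i, (i <= k)%N -> (inZp (P i) : 'I_n.+1) = c + psum ds i.
  move=> i hi; apply: val_inj; rewrite inZpval /P insubdK //.
  by rewrite unfold_in hlt.
pose xs := [seq (delta_mx (P j) (P j.+1) : 'M[F]_n) | j <- iota 0 k].
have := GI xs.
rewrite size_map size_iota => /(_ erefl).
have : mx_monomial xs (P 0%N) (P (0 + k)%N) = 1 by apply: path_entry.
move=> he h; have := oner_neq0 F; rewrite -he h ?mxE ?eqxx //.
move=> i hi p q; rewrite /xs (nth_map 0%N) ?size_iota // nth_iota // add0n.
rewrite mxE; case: (p =P P i) => [-> |]; last by rewrite eqxx.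
case: (q =P P i.+1) => [-> |]; last by rewrite andbF eqxx.
move=> _; rewrite /std_tuple hP // hP; last by apply: ltnW.
have -> : psum ds i.+1 = psum ds i + ds`_i by [].
by rewrite addrA [c + _ + _]addrC addrK.
Qed.
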